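(* Let $\ell,m,n$ be positive integers with $\ell<n$, $m<n$, $\gcd(m,n)=1$, and let $\mathcal{X},\mathcal{Y},\hat{\mathcal{X}},\hat{\mathcal{Y}},\check{\mathcal{X}},\check{\mathcal{Y}}$ be the words defined in the context from $\mathcal{S}=\mathcal{F}[\ell,m,n]$. Then, as words of length $n$, $$\mathcal{F}[\ell,m,n]=\mathcal{X}\mathcal{Y}=\hat{\mathcal{X}}\hat{\mathcal{Y}},\qquad \mathcal{F}[\ell,m,n]^{(\ell d)}=\mathcal{Y}\mathcal{X}=\check{\mathcal{X}}\check{\mathcal{Y}},$$ $$\mathcal{F}[\ell,m,n]^{(-d)}=\mathcal{X}^{\overline0}\mathcal{Y}^{\overline0}=\hat{\mathcal{Y}}\hat{\mathcal{X}},\qquad \mathcal{F}[\ell,m,n]^{((\ell-1)d)}=\mathcal{Y}^{\overline0}\mathcal{X}^{\overline0}=\check{\mathcal{Y}}\check{\mathcal{X}}.$$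
   Context: For positive integers $\ell<n$, $m<n$, $\gcd(m,n)=1$, $\mathcal{F}[\ell,m,n]_i=L$ if $im\bmod n<\ell$ and $R$ otherwise; it has period $n$ and is identified with the word $\mathcal{F}_0\cdots\mathcal{F}_{n-1}$. $d\in\{1,\dots,n-1\}$ is the inverse of $m$ mod $n$. For a sequence $\mathcal{S}$ of period $n$, $\mathcal{S}^{(j)}_i=\mathcal{S}_{i+j}$ (left shift, identified with the word $\mathcal{S}^{(j)}_0\cdots\mathcal{S}^{(j)}_{n-1}$). Words are finite strings over $\{L,R\}$, indexed from $0$; juxtaposition is concatenation; for a word $\mathcal{W}$, $\mathcal{W}^{\overline0}$ is $\mathcal{W}$ with its symbol of index $0$ changed. With $\mathcal{S}=\mathcal{F}[\ell,m,n]$ and all indices of $\mathcal{S}$ taken mod $n$, for an integer $p$ and $q\ge1$ write $\mathcal{S}[p;q]=\mathcal{S}_p\mathcal{S}_{p+1}\cdots\mathcal{S}_{p+q-1}$. Then $\mathcal{X}=\mathcal{S}[0;\ell d\bmod n]$ (the symbols $\mathcal{S}_0\cdots\mathcal{S}_{(\ell d-1)\bmod n}$), $\mathcal{Y}=\mathcal{S}_{\ell d\bmod n}\cdots\mathcal{S}_{n-1}$, $\hat{\mathcal{X}}=\mathcal{S}_0\cdots\mathcal{S}_{n-d-1}$, $\hat{\mathcal{Y}}=\mathcal{S}_{n-d}\cdots\mathcal{S}_{n-1}$, $\check{\mathcal{X}}=\mathcal{S}[\ell d;\,n-d]$ (cyclically from $\mathcal{S}_{\ell d\bmod n}$ to $\mathcal{S}_{((\ell-1)d-1)\bmod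 n}$), and $\check{\mathcal{Y}}=\mathcal{S}[(\ell-1)d;\,d]$ (cyclically from $\mathcal{S}_{(\ell-1)d\bmod n}$ to $\mathcal{S}_{(\ell d-1)\bmod n}$). *)

(* Defs.v *)
From mathcomp Require Import all_boot all_order all_algebra.
Set Implicit Arguments. Unset Strict Implicit. Unset Printing Implicit Defensive.

Inductive sym := L | R.

Definition flip_sym (a : sym) : sym := match a with L => R | R => L end.

Definition flip0 (w : seq sym) : seq sym :=
  match w with [::] => [::] | a :: t => flip_sym a :: t end.

Definition Fsym (l m n i : nat) : sym := if (i * m) %% n < l then L else R.

Definition Sz (l m n : nat) (p : int) : sym :=
  Fsym l m n `|(p %% (n%:Z))%Z|%N.

Definition subw (l m n : nat) (p : int) (q : nat) : seq sym :=
  [seq Sz l m n (p + (i%:Z))%R | i <- iota 0 q].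

Definition Fword (l m n : nat) : seq sym := [seq Fsym l m n i | i <- iota 0 n].

(* Shift S^{(j)} identified with the word S^{(j)}_0 ... S^{(j)}_{n-1}. *)
Definition shiftw (l m n : nat) (j : int) : seq sym := subw l m n j n.

(* Main.v *)
Require Import Defs.
From mathcomp Require Import all_boot all_order all_algebra.
From mathcomp Require Import zify.
Import GRing.Theory.

Lemma size_subw l m n p q : size (subw l m n p q) = q.
Proof. by rewrite /subw size_map size_iota. Qed.

Lemma nth_subw l m n p q i : i < q -> nth L (subw l m n p q) i = Sz l m n (p + i%:Z)%R.
Proof. by move=> hi; rewrite /subw (nth_map 0) ?size_iota // nth_iota. Qed.

Lemma Fsym_mod l m n k1 k2 : k1 %% n = k2 %% n -> Fsym l m n k1 = Fsym l m n k2.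
Proof. by move=> h; rewrite /Fsym -modnMml h modnMml. Qed.

Lemma Fsym_n l m n k : Fsym l m n (k + n) = Fsym l m n k.
Proof. by apply: Fsym_mod; rewrite modnDr. Qed.

Lemma Sz_nat l m n k : Sz l m n k%:Z = Fsym l m n k.
Proof. by rewrite /Sz modz_nat absz_nat; apply: Fsym_mod; rewrite modn_mod. Qed.

Lemma Sz_nat2 l m n a b : Sz l m n (a%:Z + b%:Z)%R = Fsym l m n (a + b).
Proof. by rewrite -PoszD Sz_nat. Qed.

Lemma Sz_n l m n p : Sz l m n (p + n%:Z)%R = Sz l m n p.
Proof. by rewrite /Sz modzDr. Qed.

Lemma Sz_negd l m n d i : d < n -> Sz l m n (- d%:Z + i%:Z)%R = Fsym l m n (i + n - d).
Proof.
move=> hd; rewrite -Sz_nat -(Sz_n _ _ _ (- _ + _)%R); congr Sz.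
rewrite -addnBA; last by apply: ltnW.
rewrite PoszD -subzn ?(ltnW hd) //; lia.
Qed.

Lemma nth_flip0 w i : 0 < size w -> nth L (flip0 w) i = if i == 0 then flip_sym (nth L w i) else nth L w i.
Proof. by case: w => // a t _; case: i. Qed.

Lemma Fsym_flip l m n d k : 0 < l -> l < n -> coprime m n -> (m * d) %% n = 1 -> d < n ->
  Fsym l m n (k + n - d) =
  if (k %% n == 0) || (k %% n == (l * d) %% n) then flip_sym (Fsym l m n k) else Fsym l m n k.
Proof.
move=> hl0 hln hcop hmd hdn.
have n1 : 1 < n by lia.
set a := (k * m) %% n.
set b := ((k + n - d) * m) %% n.
have ha : a < n by rewrite ltn_pmod //; lia.
have hb : b < n by rewrite ltn_pmod //; lia.
have hab : (b + 1) %% n = a.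
  rewrite /b /a -[1](modn_small n1) -hmd modnDm.
  rewrite modnDmr [m * d]mulnC -mulnDl.
  have -> : k + n - d + d = k + n by lia.
  by rewrite mulnDl [n * m]mulnC addnC modnMDl.
have a0 : (a == 0) = (k %% n == 0).
  rewrite /a -!/(dvdn _ _) -(Gauss_dvdl k (p := m)) //; by rewrite coprime_sym.
have al : (a == l) = (k %% n == (l * d) %% n).
  apply/eqP/eqP => h.
  - have : (k * m * d) %% n = (l * d) %% n by rewrite -modnMml -/a h.
    by rewrite -mulnA -modnMmr hmd muln1.
  - rewrite /a -modnMml h modnMml -mulnA [d * m]mulnC -modnMmr hmd muln1 modn_small //.
rewrite /Fsym -/a -/b -a0 -al.
clearbody a b. clear a0 al hmd hcop.
have [hb1|hb1] := eqVneq (b + 1) n.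
  have -> : a = 0 by rewrite -hab hb1 modnn.
  have -> : b < l = false by clear -hb1 hln; lia.
  by rewrite eqxx /= hl0.
have hab' : a = b + 1 by rewrite -hab modn_small //; clear -hb hb1; lia.
rewrite hab' addn1 /=.
have [->|hbl] := eqVneq b.+1 l.
  by rewrite ltnn leqnn.
have -> : (b < l) = (b.+1 < l) by apply/idP/idP; clear -hbl; lia.
by case: ifP.
Qed.

Lemma size_Fword l m n : size (Fword l m n) = n.
Proof. by rewrite /Fword size_map size_iota. Qed.
Lemma nth_Fword l m n i : i < n -> nth L (Fword l m n) i = Fsym l m n i.
Proof. by move=> hi; rewrite /Fword (nth_map 0) ?size_iota // nth_iota. Qed.

Lemma size_flip0 w : size (flip0 w) = size w.
Proof. by case: w. Qed.

Theorem proposition3p3 (l m n d : nat)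
  (hl0 : 0 < l) (hln : l < n) (hm0 : 0 < m) (hmn : m < n)
  (hcop : coprime m n)
  (hd0 : 0 < d) (hdn : d < n) (hmd : m * d = 1 %[mod n]) :
  let X := subw l m n 0 ((l * d) %% n) in
  let Y := subw l m n ((l * d) %% n)%:Z (n - (l * d) %% n) in
  let Xh := subw l m n 0 (n - d) in
  let Yh := subw l m n (n - d)%:Z d in
  let Xc := subw l m n (l * d)%:Z (n - d) in
  let Yc := subw l m n ((l - 1) * d)%:Z d in
  (Fword l m n = X ++ Y /\ Fword l m n = Xh ++ Yh) /\
  (shiftw l m n (l * d)%:Z = Y ++ X /\ shiftw l m n (l * d)%:Z = Xc ++ Yc) /\
  (shiftw l m n (- (d%:Z))%R = flip0 X ++ flip0 Y /\
   shiftw l m n (- (d%:Z))%R = Yh ++ Xh) /\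
  (shiftw l m n ((l - 1) * d)%:Z = flip0 Y ++ flip0 X /\
   shiftw l m n ((l - 1) * d)%:Z = Yc ++ Xc).
Proof.
have n1 : 1 < n by lia.
rewrite (modn_small n1) in hmd.
have hflip := fun k => Fsym_flip l m n d k hl0 hln hcop hmd hdn.
have ldlt : (l * d) %% n < n by rewrite ltn_pmod //; lia.
have ldpos : 0 < (l * d) %% n.
  rewrite lt0n; apply/negP => /eqP h.
  have : l %% n = 0.
    have e1 : l %% n = (l * (m * d)) %% n by rewrite -modnMmr hmd muln1.
    by rewrite e1 mulnCA mulnC -modnMml h mul0n mod0n.
  by rewrite modn_small //; lia.
have ldmod : ((l * d) %% n) %% n = (l * d) %% n by rewrite modn_mod.
move: hflip ldlt ldpos ldmod.
have lde : (l - 1) * d + d = l * d by rewrite mulnBl mul1n subnK // leq_pmull.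
move: lde.
rewrite /shiftw.
set ld := l * d. set ld' := ld %% n. set ldm := (l - 1) * d.
have hld : ld %% n = ld' by [].
move: hld.
clearbody ld' ld ldm => hld lde hflip ldlt ldpos ldmod.
clear hmd hcop.
split; [split|split; [split|split; split]].
all: apply: (@eq_from_nth _ L).
all: rewrite ?(size_cat, size_Fword, size_subw, size_flip0) //; try (clear -ldlt hdn; lia).
all: move=> i hi.
all: rewrite ?(nth_cat, size_flip0, size_subw).
all: rewrite ?nth_Fword //.
all: rewrite ?nth_flip0 ?size_subw //; try (clear -ldlt; lia).
all: case: ifP => hc.
all: rewrite ?(nth_subw _ _ _ _ _ _ hi).
all: rewrite nth_subw; last (clear -hc hi ldlt hdn; lia).
all: rewrite ?(Sz_nat2, add0r, Sz_nat, Sz_negd) //.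
- by congr Fsym; clear -hc hi; lia.
- by congr Fsym; clear -hc hi; lia.
- by apply: Fsym_mod; rewrite -modnDml hld.
- rewrite add0n -(Fsym_n _ _ _ (i - _)); apply: Fsym_mod; rewrite -modnDml hld.
  by congr modn; clear -hc hi ldlt; lia.
- rewrite -(Fsym_n _ _ _ (ldm + _)); congr Fsym; clear -hc hi lde hdn; lia.
- rewrite hflip add0n (modn_small hi).
  have -> : (i == ld') = false by apply/negbTE; rewrite neq_ltn hc.
  by rewrite orbF.
- move/negbT: hc; rewrite -leqNgt => hc.
  rewrite hflip (modn_small hi).
  have -> : ld' + (i - ld') = i by clear -hc; lia.
  have -> : (i - ld' == 0) = (i == ld') by apply/idP/idP => /eqP h; apply/eqP; clear -h hc; lia.
  have -> : (i == 0) = false by apply/negbTE; rewrite -lt0n; clear -hc ldpos; lia.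
  by [].
- by congr Fsym; clear -hi hdn; lia.
- by rewrite add0n -(Fsym_n _ _ _ (i - d)); congr Fsym; clear -hc hi hdn; lia.
- rewrite -(Fsym_n _ _ _ (ldm + i)).
  have -> : ldm + i + n = ld + i + n - d by clear -lde; lia.
  rewrite hflip -modnDml hld.
  have -> : Fsym l m n (ld + i) = Fsym l m n (ld' + i)
    by apply: Fsym_mod; rewrite -modnDml hld.
  rewrite (modn_small (_ : ld' + i < n)); last by clear -hc hi ldlt; lia.
  have -> : (ld' + i == 0) = false by apply/negbTE; rewrite -lt0n; clear -ldpos; lia.
  have -> : (ld' + i == ld') = (i == 0) by apply/idP/idP => /eqP h; apply/eqP; clear -h; lia.
  by [].
- move/negbT: hc; rewrite -leqNgt => hc.
  rewrite -(Fsym_n _ _ _ (ldm + i)).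
  have -> : ldm + i + n = ld + i + n - d by clear -lde; lia.
  rewrite hflip -modnDml hld.
  have -> : Fsym l m n (ld + i) = Fsym l m n (ld' + i)
    by apply: Fsym_mod; rewrite -modnDml hld.
  have -> : ld' + i = (i - (n - ld')) + n by clear -hc hi ldlt; lia.
  rewrite modnDr Fsym_n add0n modn_small; last by clear -hc hi ldlt; lia.
  have -> : (i - (n - ld') == ld') = false
    by apply/negbTE; rewrite neq_ltn; apply/orP; left; clear -hi hc ldlt ldpos; lia.
  by rewrite orbF.
- by congr Fsym; clear -hc hi hdn lde; lia.
Qed.
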